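(* Let $H\ge1$, $V$ a finite node set and $r\in V$. Let $\mathcal{A}$ and $\mathcal{P}$ be the hop-constrained tree polytopes defined in the context, and let $\mathcal{A}_X=\{x:\exists y,\ (x,y)\in\mathcal{A}\}$ and $\mathcal{P}_X=\{x:\exists l,g,\ (x,l,g)\in\mathcal{P}\}$ be their projections onto the $x$-variable space. Then $\mathcal{P}_X\subseteq\mathcal{A}_X$.
   Context: Setting: $V$ is the node set of a complete undirected graph, $r\in V$ a root, $H$ the hop limit. For every ordered pair $(u,v)$ of distinct nodes there is a real variable $x_{u,v}$. Common constraints: (X1) $\sum_{u\in V\setminus\{v\}}x_{u,v}\le 1$ for all $v\in V$; (X2) $\sum_{u\in V\setminus\{v,w\}}x_{u,v}\ge x_{v,w}$ for all $v\in V\setminus\{r\}$, $w\in V\setminus\{v\}$; (X3) $0\le x_{u,v}\le 1$ for all arcs. Partial-ordering polytope $\mathcal{P}$: variables $x$ and $l_{v,i},g_{i,v}$ for $v\in V$, $i\in\{0,\dots,H\}$, satisfying (X1)–(X3) and: $l_{r,0}=g_{0,r}=0$; $l_{v,1}=g_{H,v}=0$ for $v\neq r$; $l_{v,i}-l_{v,i+1}\le0$ for $v\in V$, $i=0,\dots,H-1$; $g_{i,v}+l_{v,i+1}=1$ for $v\in V$, $i=0,\dots,H-1$; $l_{u,i}+g_{i,v}\ge x_{u,v}$ for $u\in V$, $v\neq u$, $i=0,\dots,H$; $0\le l_{v,i},g_{i,v}\le1$. Assignment polytope $\mathcal{A}$: variables $x$ and $y_{v,i}$ for $v\in V$, $i\in\{0,\dots,H\}$,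 satisfying (X1)–(X3) and: $y_{r,0}=1$; $y_{r,i}=0$ for $i=1,\dots,H$; $y_{v,0}=0$ for $v\neq r$; $\sum_{i=1}^H y_{v,i}=1$ for $v\neq r$; $y_{u,i}-y_{v,i+1}+x_{u,v}\le1$ for $u\in V$, $v\neq u$, $i=0,\dots,H-1$; $y_{u,H}+x_{u,v}\le 1$ for $u\in V$, $v\neq u$; $0\le y_{v,i}\le 1$. *)

(* Defs.v *)
From mathcomp Require Import all_boot all_order all_algebra.
From mathcomp Require Import reals.
Set Implicit Arguments. Unset Strict Implicit. Unset Printing Implicit Defensive.
Import Order.TTheory GRing.Theory Num.Theory.
Local Open Scope ring_scope.

(* Arc variables x u v (only meaningful for u != v); hop indices are nats,
   constraints only quantify over indices 0..H. *)
Section HopTree.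
Variables (R : realType) (V : finType) (r : V) (H : nat).

Definition X_constraints (x : V -> V -> R) : Prop :=
  (forall v : V, \sum_(u | u != v) x u v <= 1) /\
  (forall v w : V, v != r -> w != v ->
     x v w <= \sum_(u | (u != v) && (u != w)) x u v) /\
  (forall u v : V, u != v -> 0 <= x u v <= 1).

Definition in_P (x : V -> V -> R) (l : V -> nat -> R) (g : nat -> V -> R)
  : Prop :=
  X_constraints x /\
  l r 0%N = 0 /\ g 0%N r = 0 /\
  (forall v : V, v != r -> l v 1%N = 0 /\ g H v = 0) /\
  (forall (v : V) (i : nat), (i < H)%N -> l v i - l v i.+1 <= 0) /\
  (forall (v : V) (i : nat), (i < H)%N -> g i v + l v i.+1 = 1) /\
  (forall (u v : V) (i : nat), u != v -> (i <= H)%N -> x u v <= l u i + g i v) /\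
  (forall (v : V) (i : nat), (i <= H)%N ->
     0 <= l v i <= 1 /\ 0 <= g i v <= 1).

Definition in_A (x : V -> V -> R) (y : V -> nat -> R) : Prop :=
  X_constraints x /\
  y r 0%N = 1 /\
  (forall i : nat, (1 <= i <= H)%N -> y r i = 0) /\
  (forall v : V, v != r -> y v 0%N = 0) /\
  (forall v : V, v != r -> \sum_(1 <= i < H.+1) y v i = 1) /\
  (forall (u v : V) (i : nat), u != v -> (i < H)%N ->
     y u i - y v i.+1 + x u v <= 1) /\
  (forall u v : V, u != v -> y u H + x u v <= 1) /\
  (forall (v : V) (i : nat), (i <= H)%N -> 0 <= y v i <= 1).

Definition in_PX (x : V -> V -> R) : Prop := exists l g, in_P x l g.
Definition in_AX (x : V -> V -> R) : Prop := exists y, in_A x y.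

End HopTree.

(* Main.v *)
Require Import Defs.
From mathcomp Require Import all_boot all_order all_algebra.
From mathcomp Require Import reals.
From mathcomp Require Import lra zify.
Set Implicit Arguments. Unset Strict Implicit. Unset Printing Implicit Defensive.
Import Order.TTheory GRing.Theory Num.Theory.
Local Open Scope ring_scope.

Lemma bmax_ge (R : realType) (V : finType) (P : pred V) (F : V -> R) u :
  P u -> F u <= \big[Num.max/0]_(w | P w) F w.
Proof.
move=> Pu; have : u \in index_enum V by rewrite mem_index_enum.
elim: (index_enum V) => //= a s IH; rewrite inE big_cons; case/orP=> [/eqP<-|us].
  by rewrite Pu le_max lexx.
by case: (P a); rewrite ?le_max IH ?orbT.
Qed.

Lemma bmax_le (R : realType) (V : finType) (P : pred V) (F : V -> R) b :
  0 <= b -> (forall u, P u -> F u <= b) -> \big[Num.max/0]_(w | P w) F w <= b.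
Proof.
move=> b0 H; elim/big_rec: _ => // i t Pi Ht; rewrite ge_max Ht H //.
Qed.

Lemma bmax_ge0 (R : realType) (V : finType) (P : pred V) (F : V -> R) :
  0 <= \big[Num.max/0]_(w | P w) F w.
Proof. elim/big_rec: _ => // i t Pi Ht; by rewrite le_max Ht orbT. Qed.

Lemma bmin_le (R : realType) (V : finType) (P : pred V) (F : V -> R) u :
  P u -> \big[Num.min/1]_(w | P w) F w <= F u.
Proof.
move=> Pu; have : u \in index_enum V by rewrite mem_index_enum.
elim: (index_enum V) => //= a s IH; rewrite inE big_cons; case/orP=> [/eqP<-|us].
  by rewrite Pu ge_min lexx.
by case: (P a); rewrite ?ge_min IH ?orbT.
Qed.

Lemma bmin_ge (R : realType) (V : finType) (P : pred V) (F : V -> R) b :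
  b <= 1 -> (forall u, P u -> b <= F u) -> b <= \big[Num.min/1]_(w | P w) F w.
Proof.
move=> b0 H; elim/big_rec: _ => // i t Pi Ht; rewrite le_min Ht H //.
Qed.

Lemma sum_pos_le (R : realType) (I : Type) (s : seq I) (a : I -> R) c :
  0 <= c -> (forall i, 0 <= a i) ->
  \sum_(i <- s) Num.max (a i - c) 0 <= Num.max ((\sum_(i <- s) a i) - c) 0.
Proof.
move=> c0 a0; elim: s => [|i s IH]; first by rewrite !big_nil; rewrite le_max lexx orbT.
rewrite !big_cons.
have hs : 0 <= \sum_(j <- s) a j by apply: sumr_ge0.
have hm : Num.max (\sum_(j <- s) a j - c) 0 <= \sum_(j <- s) a j.
  by rewrite ge_max hs andbT; lra.
have := a0 i.
case: (lerP (a i - c) 0) => h1 h2.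
  rewrite add0r (le_trans IH) //; rewrite ge_max le_max le_max lexx orbT andbT.
  by apply/orP; left; lra.
rewrite le_max; apply/orP; left; lra.
Qed.

Definition cst (R : realType) (V : finType) (x : V -> V -> R) (u v : V) : R := 1 - x u v.

Fixpoint Bd (R : realType) (V : finType) (x : V -> V -> R) (d : nat) (v : V) : R :=
  match d with
  | 0 => \big[Num.min/1]_(w | w != v) cst x v w
  | d'.+1 => \big[Num.min/1]_(w | w != v) (Bd x d' w + cst x v w)
  end.

Definition BB (R : realType) (V : finType) (x : V -> V -> R) (H k : nat) (v : V) : R :=
  Bd x (H - k) v.
Definition SS (R : realType) (V : finType) (x : V -> V -> R) (H k : nat) (v : V) : R :=
  \sum_(k.+1 <= j < H.+1) BB x H j v.
Definition fm (R : realType) (V : finType) (x : V -> V -> R) (Y : V -> R) (v : V) : R :=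
  \big[Num.max/0]_(u | u != v) (Y u - cst x u v).

Fixpoint st (R : realType) (V : finType) (r : V) (x : V -> V -> R) (H k : nat)
  : (V -> R) * (V -> R) :=
  match k with
  | 0 => (fun _ => 0, fun v => if v == r then 1 else 0)
  | k'.+1 => let p := st r x H k' in
      let Gn := fun v => if v == r then 0
                         else Num.max (p.1 v + fm x p.2 v) (1 - SS x H k'.+1 v) in
      (Gn, fun v => if v == r then 0 else Gn v - p.1 v)
  end.


Lemma B_ge0 (R : realType) (V : finType) (x : V -> V -> R) :
  (forall u v, u != v -> x u v <= 1) -> forall d v, 0 <= Bd x d v.
Proof.
move=> hx1; elim=> [|d IH] v /=; apply: bmin_ge => // w wv.
  by rewrite /cst subr_ge0 hx1 // eq_sym.
by rewrite addr_ge0 // /cst subr_ge0 hx1 // eq_sym.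
Qed.

Lemma B2 (R : realType) (V : finType) (x : V -> V -> R) H k u w :
  (k < H)%N -> w != u -> BB x H k u <= BB x H k.+1 w + cst x u w.
Proof.
move=> kH wu; rewrite /BB.
have -> : (H - k = (H - k.+1).+1)%N by lia.
by rewrite /=; apply: (bmin_le (fun w0 => Bd x (H - k.+1) w0 + cst x u w0)).
Qed.

Lemma B3 (R : realType) (V : finType) (x : V -> V -> R) H v w :
  w != v -> BB x H H v <= cst x v w.
Proof. by move=> wv; rewrite /BB subnn /=; apply: (bmin_le (cst x v)). Qed.

Lemma S_rec (R : realType) (V : finType) (x : V -> V -> R) H k v :
  (k < H)%N -> SS x H k v = BB x H k.+1 v + SS x H k.+1 v.
Proof. by move=> kH; rewrite /SS big_ltn. Qed.

Lemma S_H (R : realType) (V : finType) (x : V -> V -> R) H v : SS x H H v = 0.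
Proof. by rewrite /SS big_geq. Qed.

Lemma S_ge0 (R : realType) (V : finType) (x : V -> V -> R) H k v :
  (forall u v, u != v -> x u v <= 1) -> 0 <= SS x H k v.
Proof. by move=> hx1; apply: sumr_ge0 => j _; apply: B_ge0. Qed.

Lemma B4 (R : realType) (V : finType) (r : V) (H : nat) (x : V -> V -> R) (l : V -> nat -> R) :
  (forall u v, u != v -> x u v <= 1) ->
  (forall u, u != r -> x u r <= 0) ->
  (forall v w, v != w -> w != r -> x v w <= l v H) ->
  (forall v w k, v != w -> (k < H)%N -> x v w <= l v k + 1 - l w k.+1) ->
  (forall v i, (i <= H)%N -> 0 <= l v i) ->
  forall (d : nat) v, v != r -> (d <= H)%N -> 1 - l v (H - d)%N <= Bd x d v.
Proof.
move=> hx1 hxr hxH hxk hl0; elim=> [|d IH] v vr dH /=.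
  rewrite subn0; apply: bmin_ge; first by have := hl0 v H (leqnn H); lra.
  move=> w wv; rewrite /cst.
  have := hl0 v H (leqnn H).
  case: (eqVneq w r) => [->|wr].
    by have := hxr v vr; lra.
  by have := hxH v w ltac:(by rewrite eq_sym) wr; lra.
apply: bmin_ge; first by have := hl0 v (H - d.+1)%N (leq_subr _ _); lra.
move=> w wv; rewrite /cst.
have := hl0 v (H - d.+1)%N (leq_subr _ _).
case: (eqVneq w r) => [->|wr].
  have := hxr v vr; have := B_ge0 hx1 d r; lra.
have := IH w wr (ltnW dH).
have := hxk v w (H - d.+1)%N ltac:(by rewrite eq_sym) ltac:(lia).
have -> : ((H - d.+1).+1 = H - d)%N by lia.
lra.
Qed.

Lemma st1S (R : realType) (V : finType) (r : V) (x : V -> V -> R) H k v :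
  (st r x H k.+1).1 v = if v == r then 0 else
    Num.max ((st r x H k).1 v + fm x (st r x H k).2 v) (1 - SS x H k.+1 v).
Proof. by []. Qed.

Lemma st2S (R : realType) (V : finType) (r : V) (x : V -> V -> R) H k v :
  (st r x H k.+1).2 v = if v == r then 0 else (st r x H k.+1).1 v - (st r x H k).1 v.
Proof. by []. Qed.

Lemma tele (R : realType) (V : finType) (r : V) (x : V -> V -> R) H k v :
  v != r -> \sum_(i < k.+1) (st r x H i).2 v = (st r x H k).1 v.
Proof.
move=> vr; elim: k => [|k IH].
  by rewrite big_ord1 /= (negbTE vr).
rewrite big_ord_recr IH (st2S r x H k v) (negbTE vr) /=; lra.
Qed.

Lemma tele_r (R : realType) (V : finType) (r : V) (x : V -> V -> R) H k :
  \sum_(i < k.+1) (st r x H i).2 r = 1.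
Proof.
elim: k => [|k IH]; first by rewrite big_ord1 /= eqxx.
rewrite big_ord_recr IH (st2S r x H k r) eqxx; exact: addr0.
Qed.

Definition Facts (R : realType) (V : finType) (r : V) (x : V -> V -> R) H i :=
  forall v, 0 <= (st r x H i).2 v /\ (st r x H i).2 v <= 1 /\
   (v != r -> [/\ 0 <= (st r x H i).1 v, (st r x H i).1 v <= 1,
       1 - SS x H i v <= (st r x H i).1 v,
       (st r x H i).1 v <= Num.max (\sum_(j < i) fm x (st r x H j).2 v) (1 - SS x H i v)
     & (0 < i)%N -> (st r x H i).2 v <= BB x H i v]).

Lemma term_le_sum (R : realType) (V : finType) (P : pred V) (F : V -> R) u :
  (forall w, 0 <= F w) -> P u -> F u <= \sum_(w | P w) F w.
Proof.
move=> F0 Pu; rewrite (bigD1 u) //=.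
have : 0 <= \sum_(i | P i && (i != u)) F i by apply: sumr_ge0.
lra.
Qed.

Lemma fB (R : realType) (V : finType) (r : V) (x : V -> V -> R) H k v :
  (k < H)%N ->
  (forall u v, u != v -> x u v <= 1) ->
  (forall v, v != r -> 1 <= BB x H 1 v) ->
  ((0 < k)%N -> forall u, u != r -> (st r x H k).2 u <= BB x H k u) ->
  v != r -> fm x (st r x H k).2 v <= BB x H k.+1 v.
Proof.
move=> kH hx1 hB1 hY vr; apply: bmax_le; first by apply: B_ge0.
move=> u uv.
have c0 : 0 <= cst x u v by rewrite /cst; have := hx1 u v uv; lra.
have hB := B_ge0 hx1 (H - k.+1) v.
case: k kH hY hB => [|k'] kH hY hB.
  rewrite /=; case: (eqVneq u r) => [eur|ur].
    rewrite eur /cst; have := hB1 v vr; have := hx1 u v uv; rewrite eur; lra.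
  by rewrite /BB; lra.
rewrite st2S; case: (eqVneq u r) c0 => [->|ur] c0.
  by rewrite /BB; lra.

have := hY isT u ur; rewrite st2S (negbTE ur) => h1.
have h2 := @B2 _ _ x H k'.+1 u v kH ltac:(by rewrite eq_sym uv); move: h2; rewrite /BB => h2.
move: h1; rewrite /BB; lra.
Qed.

Lemma inv_facts (R : realType) (V : finType) (r : V) (x : V -> V -> R) H :
  (0 < H)%N ->
  (forall u v, u != v -> 0 <= x u v) ->
  (forall u v, u != v -> x u v <= 1) ->
  (forall v, \sum_(u | u != v) x u v <= 1) ->
  (forall v, v != r -> 1 <= BB x H 1 v) ->
  forall k, (k <= H)%N -> forall i, (i <= k)%N -> Facts r x H i.
Proof.
move=> H0 hx0 hx1 hX1 hB1.
have c0 : forall u v, u != v -> 0 <= cst x u v.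
  by move=> u v uv; rewrite /cst; have := hx1 u v uv; lra.
elim=> [|k IH] kH i ik.
  have -> : i = 0%N by lia.
  move=> v; rewrite /=; split; first by case: (v == r).
  split; first by case: (v == r); lra.
  move=> vr; split => //; rewrite ?big_ord0.
  - have := S_rec x v H0; have := S_ge0 H 1 v hx1; have := hB1 v vr; lra.
  - by rewrite le_max lexx.
case: (ltnP i k.+1) => [ilt|ige].
  by apply: (IH (ltnW kH)); lia.
have -> : i = k.+1 by lia.
have kH' : (k < H)%N by lia.
have Fk : forall j, (j <= k)%N -> Facts r x H j by move=> j jk; apply: (IH (ltnW kH)).
move=> v.
set f := fm x (st r x H k).2 v.
have hf0 : 0 <= f by apply: bmax_ge0.
have hfB : v != r -> f <= BB x H k.+1 v.
  apply: fB => // kp u ur.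
  by have [_ [_ /(_ ur) [_ _ _ _ /(_ kp)]]] := Fk k (leqnn k) u.
have hQ : v != r -> \sum_(j < k.+1) fm x (st r x H j).2 v <= 1.
  move=> vr.
  apply: (@le_trans _ _ (\sum_(j < k.+1) \sum_(u | u != v)
      Num.max ((st r x H j).2 u - cst x u v) 0)).
    apply: ler_sum => j _; apply: bmax_le.
      by apply: sumr_ge0 => u _; rewrite le_max lexx orbT.
    move=> u uv.
    have h := @term_le_sum _ _ (fun w => w != v)
      (fun w => Num.max ((st r x H j).2 w - cst x w v) 0) u
      (fun w => ltac:(by rewrite le_max lexx orbT)) uv.
    apply: le_trans h; by rewrite le_max lexx.
  rewrite exchange_big /=; apply: le_trans (hX1 v); apply: ler_sum => u uv.
  have cu := c0 u v uv.
  have ha : forall j : 'I_k.+1, 0 <= (st r x H j).2 u.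
    by move=> j; have [h _] := Fk j (ltn_ord j : (j <= k)%N)  u.
  apply: le_trans (@sum_pos_le _ _ (index_enum 'I_k.+1)
     (fun j : 'I_k.+1 => (st r x H j).2 u) (cst x u v) cu ha) _.
  have hs : \sum_(j < k.+1) (st r x H j).2 u <= 1.
    case: (eqVneq u r) => [->|ur]; first by rewrite tele_r.
    rewrite tele //; by have [_ [_ /(_ ur) [_ ? _ _ _]]] := Fk k (leqnn k) u.
  rewrite ge_max (hx0 u v uv) andbT; move: hs cu; rewrite /cst; lra.
case: (eqVneq v r) => [->|vr].
  by rewrite st2S eqxx; split => //; split => //; rewrite eqxx.
have [_ [_ /(_ vr) [hG0 hG1 hGS hGQ _]]] := Fk k (leqnn k) v.
have hfb := hfB vr; have hq := hQ vr.
have hS := S_rec x v kH'; have hS' := S_ge0 H k.+1 v hx1.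
have hQ' : \sum_(j < k.+1) fm x (st r x H j).2 v = \sum_(j < k) fm x (st r x H j).2 v + f.
  by rewrite big_ord_recr.
rewrite hQ' in hq *.
rewrite st2S st1S (negbTE vr).
move: hGQ hGS hG0 hG1 hq hfb hf0 hS hS'.
set G := (st r x H k).1 v; set Q := \sum_(j < k) _; set S := SS x H k v; set S' := SS x H k.+1 v.
set b := BB x H k.+1 v.
move=> hGQ hGS hG0 hG1 hq hfb hf0 hS hS'.
move: hGQ; case: (lerP Q (1 - S)) => hQS hGQ;
case: (lerP (G + f) (1 - S')) => h1; (split; [|split]) => //; try lra;
move=> _; (split; try lra); try (move=> _; lra);
case: (lerP (Q + f) (1 - S')) => h2; lra.
Qed.

Theorem theorem2 (R : realType) (V : finType) (r : V) (H : nat) :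
  (1 <= H)%N ->
  forall x : V -> V -> R, in_PX r H x -> in_AX r H x.
Proof.
move=> H0 x [l [g [hX [hl0 [hg0 [hl1 [hmono [hgl [harc hbnd]]]]]]]]].
have [hX1 [hX2 hX3]] := hX.
have hx0 : forall u v, u != v -> 0 <= x u v by move=> u v uv; have /andP[] := hX3 u v uv.
have hx1 : forall u v, u != v -> x u v <= 1 by move=> u v uv; have /andP[] := hX3 u v uv.
have hxr : forall u, u != r -> x u r <= 0.
  move=> u ur; have := harc u r 0%N ur (leq0n _); rewrite hg0.
  have := hmono u 0%N H0; have [-> _] := hl1 u ur; lra.
have hxH : forall v w, v != w -> w != r -> x v w <= l v H.
  move=> v w vw wr; have := harc v w H vw (leqnn H); have [_ ->] := hl1 w wr; lra.
have hxk : forall v w k, v != w -> (k < H)%N -> x v w <= l v k + 1 - l w k.+1.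
  move=> v w k vw kH; have := harc v w k vw (ltnW kH); have := hgl w k kH; lra.
have hlp : forall v i, (i <= H)%N -> 0 <= l v i.
  by move=> v i iH; have [/andP[] ] := hbnd v i iH.
have hB1 : forall v, v != r -> 1 <= BB x H 1 v.
  move=> v vr; rewrite /BB.
  have := @B4 _ _ r H x l hx1 hxr hxH hxk hlp (H - 1)%N v vr (leq_subr 1 H).
  have -> : (H - (H - 1) = 1)%N by lia.
  by have [-> _] := hl1 v vr; lra.
have F := @inv_facts _ _ r x H H0 hx0 hx1 hX1 hB1 H (leqnn H).
exists (fun v i => (st r x H i).2 v).
split => //; split; first by rewrite /= eqxx.
split.
  by move=> [|i] //= _; rewrite eqxx.
split; first by move=> v vr /=; rewrite (negbTE vr).
split.
  move=> v vr.
  have := @big_ltn R 0 +%R 0%N H.+1 (fun i => (st r x H i).2 v) (ltn0Sn H).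
  rewrite big_mkord tele // /= (negbTE vr) add0r => <-.
  have [_ [_ /(_ vr) [_ h1 h2 _ _]]] := F H (leqnn H) v.
  move: h2; rewrite S_H; lra.
split.
  move=> u v i uv iH.
  have [hy0 [hy1 _]] := F i (ltnW iH) u.
  case: (eqVneq v r) => [vr|vr].
    rewrite vr st2S eqxx; have := hxr u ltac:(by rewrite -vr); lra.
  rewrite st2S st1S (negbTE vr).
  have hm := @bmax_ge _ _ (fun w => w != v) (fun w => (st r x H i).2 w - cst x w v) u uv.
  have hM : (st r x H i).1 v + fm x (st r x H i).2 v <=
     Num.max ((st r x H i).1 v + fm x (st r x H i).2 v) (1 - SS x H i.+1 v).
    by rewrite le_max lexx.
  move: hm hM; rewrite /fm /cst; lra.
split.
  move=> u v uv.
  case: (eqVneq u r) => [ur|ur].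
    case: H H0 {F hxk hlp hB1 hxH hl1 hmono hgl harc hbnd} => [//|H'] _.
    by rewrite ur st2S eqxx add0r; apply: hx1; rewrite -ur.
  have [_ [_ /(_ ur) [_ _ _ _ /(_ H0) hY]]] := F H (leqnn H) u.
  have := @B3 _ _ x H u v ltac:(by rewrite eq_sym uv).
  move: hY; rewrite /cst; lra.
move=> v i iH; have [h0 [h1 _]] := F i iH v; by rewrite h0 h1.
Qed.
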